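(* Let $G$ be a finite graph with no isolated vertices. If $G$ has $2N+1$ vertices and is almost Hamiltonian, then there is no nontrivial circuit injection $f:G_M\rightarrow B$ with $B$ a binary matroid. If $G$ has $2N$ vertices and is Hamiltonian, then there is no nontrivial circuit injection $f:G_M\rightarrow B$ with $B$ a binary matroid.
   Context: Graphs are undirected without loops or multiple edges. $G_M$ is the cycle matroid of $G$ (cells: edges; circuits: edge sets of cycles of $G$). A matroid is a pair $(S,\mathscr{C})$, $S\neq\emptyset$, $\mathscr{C}\subseteq 2^S$, satisfying: (I) $A,B\in\mathscr{C}$, $A\subseteq B$ implies $A=B$; (II) $A,B\in\mathscr{C}$, $a\in A\cap B$, $b\in (A\cup B)\setminus(A\cap B)$ implies there exists $D\in\mathscr{C}$ with $D\subseteq A\cup B$, $a\notin D$, $b\in D$. A matroid is binary if the symmetric difference of any two circuits is a union of pairwise disjoint circuits. A circuit injection $f:G_M\rightarrow B$ is a bijection from $E(G)$ onto the cells of $B$ sending each circuit of $G$ to a circuit of $B$; it is nontrivial if $B$ has a circuit not equal to the image of any circuit of $G$. $G$ is Hamiltonian if some circuit contains all its vertices. A graph with $n$ vertices is almost Hamiltonian if every set of $n-1$ of its vertices is contained in the vertex set of some circuit. *)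

(* Defs.v *)
From mathcomp Require Import all_boot.
Set Implicit Arguments. Unset Strict Implicit. Unset Printing Implicit Defensive.

(* A finite simple graph: vertex set V (finType), adjacency e : rel V,
   assumed symmetric and irreflexive in the theorem. *)
Section Graph.
Variables (V : finType) (e : rel V).

Definition edges : {set {set V}} :=
  [set A : {set V} | [exists x, exists y, (e x y) && (A == [set x; y])]].

Definition is_cycle (s : seq V) : bool := ucycleb e s && (2 < size s).

Definition cycle_vertices (s : seq V) : {set V} := [set x in s].
Definition cycle_edges (s : seq V) : {set {set V}} :=
  [set [set x; next s x] | x in s].

Definition hamiltonian : Prop :=
  exists s, is_cycle s /\ cycle_vertices s = [set: V].

Definition almost_hamiltonian : Prop :=
  forall A : {set V}, #|A| = #|V| - 1 ->
    exists s, is_cycle s /\ A \subset cycle_vertices s.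

Definition no_isolated_vertices : Prop := forall v, exists w, e v w.
End Graph.

Section Matroid.
Variables (S : finType) (C : {set {set S}}).

Definition symdiff (A B : {set S}) : {set S} := (A :\: B) :|: (B :\: A).

Definition is_matroid : Prop :=
  0 < #|S| /\
  (forall A B, A \in C -> B \in C -> A \subset B -> A = B) /\
  (forall A B a b, A \in C -> B \in C -> a \in A :&: B ->
      b \in symdiff A B ->
      exists2 D, D \in C & [/\ D \subset A :|: B, a \notin D & b \in D]).

Definition is_binary : Prop :=
  forall A B, A \in C -> B \in C ->
    exists P : {set {set S}}, [/\ P \subset C, trivIset P & cover P = symdiff A B].
End Matroid.

(* circuit injection f : G_M -> B, f given on {set V} but only its
   restriction to E(G) matters *)
Definition circuit_injection (V : finType) (e : rel V) (S : finType)
    (C : {set {set S}}) (f : {set V} -> S) : Prop :=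
  {in edges e &, injective f} /\ f @: edges e = [set: S] /\
  (forall s, is_cycle e s -> f @: cycle_edges s \in C).

Definition nontrivial_ci (V : finType) (e : rel V) (S : finType)
    (C : {set {set S}}) (f : {set V} -> S) : Prop :=
  exists2 D, D \in C & forall s, is_cycle e s -> D <> f @: cycle_edges s.

(* Main.v *)
Require Import Defs.
From mathcomp Require Import all_boot zify.
Set Implicit Arguments. Unset Strict Implicit. Unset Printing Implicit Defensive.


Section SD.
Variable S : finType.
Implicit Types A B : {set S}.

Lemma in_sd A B x : (x \in symdiff A B) = (x \in A) (+) (x \in B).
Proof. by rewrite /symdiff !inE; case: (x \in A); case: (x \in B). Qed.

Lemma sdC A B : symdiff A B = symdiff B A.
Proof. by apply/setP=> x; rewrite !in_sd addbC. Qed.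
Lemma sdA A B D : symdiff A (symdiff B D) = symdiff (symdiff A B) D.
Proof. by apply/setP=> x; rewrite !in_sd addbA. Qed.
Lemma sd0 A : symdiff A set0 = A.
Proof. by apply/setP=> x; rewrite !in_sd inE addbF. Qed.
Lemma sdvv A : symdiff A A = set0.
Proof. by apply/setP=> x; rewrite !in_sd inE addbb. Qed.
Lemma sdK A B : symdiff A (symdiff A B) = B.
Proof. by rewrite sdA sdvv sdC sd0. Qed.

Lemma card_sd A B : odd #|symdiff A B| = odd #|A| (+) odd #|B|.
Proof.
have h1 := cardsID B A; have h2 := cardsID A B.
have hd : #|symdiff A B| = #|A :\: B| + #|B :\: A|.
  rewrite /symdiff cardsU; suff -> : (A :\: B) :&: (B :\: A) = set0 by rewrite cards0 subn0.
  by apply/setP=> x; rewrite !inE; case: (x \in A); case: (x \in B); rewrite ?andbF.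
rewrite hd -h1 -h2 setIC !oddD.
by case: (odd #|A :\: B|); case: (odd #|B :\: A|); case: (odd #|B :&: A|).
Qed.

Lemma card_sd_lt A B : A :&: B != set0 -> #|symdiff A B| < #|A| + #|B|.
Proof.
move=> hn; rewrite /symdiff cardsU.
have h1 := cardsID B A; have h2 := cardsID A B.
have : 0 < #|A :&: B| by rewrite card_gt0.
rewrite setIC in h2. lia.
Qed.

Definition sdL (l : seq {set S}) := foldr (@symdiff S) set0 l.

Lemma in_sdL l x : (x \in sdL l) = odd (count (fun A => x \in A) l).
Proof.
elim: l => [|A l IH] /=; first by rewrite inE.
by rewrite in_sd IH oddD; case: (x \in A).
Qed.

Lemma sdL_cat l1 l2 : sdL (l1 ++ l2) = symdiff (sdL l1) (sdL l2).
Proof. by apply/setP=> x; rewrite in_sd !in_sdL count_cat oddD. Qed.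

Lemma sdL_perm l1 l2 : perm_eq l1 l2 -> sdL l1 = sdL l2.
Proof. by move=> /permP h; apply/setP=> x; rewrite !in_sdL h. Qed.

Lemma in_bigcup_seq (l : seq {set S}) x : x \in \bigcup_(A <- l) A -> exists2 B, B \in l & x \in B.
Proof.
elim: l => [|A l IH]; first by rewrite big_nil inE.
rewrite big_cons inE => /orP [xA|/IH [B Bl xB]]; first by exists A; rewrite ?inE ?eqxx.
by exists B; rewrite ?inE ?Bl ?orbT.
Qed.

Lemma sdL_disj l : uniq l -> {in l &, forall A B, A != B -> [disjoint A & B]} ->
  sdL l = \bigcup_(A <- l) A.
Proof.
elim: l => [|A l IH] /=; first by rewrite big_nil.
case/andP=> Al ul hd; rewrite big_cons IH //; last first.
  by move=> X Y hX hY; apply: hd; rewrite inE ?hX ?hY orbT.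
apply/setP=> x; rewrite in_sd !inE.
case xA: (x \in A) => //=; case xU: (x \in _) => //.
move/in_bigcup_seq: xU => [B Bl xB].
have : [disjoint A & B].
  apply: hd; rewrite ?inE ?eqxx ?Bl ?orbT //.
  by apply/eqP=> AB; rewrite AB Bl in Al.
by move/disjointFr => /(_ x xA); rewrite xB.
Qed.

Lemma sumn_card_rem B l : B \in l ->
  sumn (map (fun A => #|A|) l) = #|B| + sumn (map (fun A => #|A|) (rem B l)).
Proof.
move=> Bl; have hp := perm_to_rem Bl.
by rewrite (perm_sumn (perm_map _ hp)).
Qed.

Lemma W_lemma (C : {set {set S}}) : is_binary C -> set0 \notin C ->
  forall l, all (mem C) l -> sdL l != set0 -> exists2 D, D \in C & D \subset sdL l.
Proof.
move=> hbin h0 l.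
move: {2}(sumn (map (fun A => #|A|) l)) (leqnn (sumn (map (fun A => #|A|) l))) => n.
elim: n l => [|n IH] [|A l] //=; first by rewrite /sdL /= eqxx.
  - move=> hle /andP[AC lC] hne.
    have : A != set0 by apply: contraNneq h0 => <-.
    by rewrite -card_gt0; lia.
  - by rewrite /sdL /= eqxx.
move=> hle /andP[AC lC] hne.
case: (boolP (has (fun B => A :&: B != set0) l)) => [/hasP [B Bl hAB] | hno].
  have BC : B \in C by move/allP: lC => /(_ B Bl).
  have [P [PC tP cP]] := hbin A B AC BC.
  set l2 := enum P ++ rem B l.
  have e1 : symdiff A (sdL l) = sdL l2.
    rewrite /l2 sdL_cat.
    have -> : sdL (enum P) = cover P.
      rewrite sdL_disj ?enum_uniq //; first by rewrite big_enum.
      by move=> X Y; rewrite !mem_enum; move/trivIsetP: tP; apply.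
    rewrite cP /= (sdL_perm (perm_to_rem Bl)) /= sdA.
    by rewrite /sdL.
  rewrite e1; apply: IH => //.
  - rewrite /l2 map_cat sumn_cat.
    have -> : sumn (map (fun A => #|A|) (enum P)) = #|cover P|.
      by rewrite sumnE big_map big_enum; apply/eqP.
    move: hle; rewrite (sumn_card_rem Bl) cP => hle.
    have := card_sd_lt hAB; lia.
  - rewrite all_cat; apply/andP; split.
      by apply/allP=> X; rewrite mem_enum => /(subsetP PC).
    by apply/allP=> X /mem_rem Xl; move/allP: lC; apply.
  - by rewrite -e1.
exists A => //; apply/subsetP=> x xA.
rewrite /= in_sd xA /= in_sdL.
suff -> : count (fun B => x \in B) l = 0 by [].
apply/eqP; rewrite -leqn0 leqNgt -has_count; apply/hasP=> [[B Bl xB]].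
move/hasP: hno; apply; exists B => //; apply/set0Pn; exists x; by rewrite inE xA xB.
Qed.
End SD.

Section G.
Variables (V : finType) (e : rel V).
Hypotheses (hsym : symmetric e) (hirr : irreflexive e).

Definition nb (Y : {set {set V}}) v := [set y | [set v; y] \in Y].
Definition par Y v := odd #|nb Y v|.
Definition Oset Y := [set v | par Y v].

Lemma par_sd Y Z v : par (symdiff Y Z) v = par Y v (+) par Z v.
Proof.
rewrite /par -card_sd.
suff -> : nb (symdiff Y Z) v = symdiff (nb Y v) (nb Z v) by [].
by apply/setP=> y; rewrite !inE.
Qed.

Lemma par0 v : par set0 v = false.
Proof.
rewrite /par (_ : nb set0 v = set0) ?cards0 //.
by apply/setP=> y; rewrite !inE.
Qed.

Lemma set2_eqL (a b y : V) : a != b -> ([set a; y] == [set a; b]) = (y == b).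
Proof.
move=> ab; apply/eqP/eqP=> [h|->] //.
have : b \in [set a; y] by rewrite h set22.
by rewrite !inE => /orP [/eqP ba|/eqP ->] //; rewrite ba eqxx in ab.
Qed.

Lemma par1 a b v : a != b -> par [set [set a; b]] v = (v == a) (+) (v == b).
Proof.
move=> ab; rewrite /par.
case: (eqVneq v a) => [->|va].
  rewrite (negPf ab) /=.
  rewrite (_ : nb _ a = [set b]) ?cards1 //.
  by apply/setP=> y; rewrite !inE set2_eqL.
case: (eqVneq v b) => [->|vb].
  rewrite (_ : nb _ b = [set a]) ?cards1 //.
  apply/setP=> y; rewrite !inE [[set a; b]]setUC set2_eqL //.
  by rewrite eq_sym.
rewrite (_ : nb _ v = set0) ?cards0 //.
apply/setP=> y; rewrite !inE; apply/negP=> /eqP h.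
have : v \in [set a; b] by rewrite -h set21.
by rewrite !inE (negPf va) (negPf vb).
Qed.

Lemma edgesP E : E \in edges e -> exists a b, [/\ e a b, a != b & E = [set a; b]].
Proof.
rewrite inE => /existsP [a /existsP [b /andP [hab /eqP ->]]].
exists a, b; split=> //; apply: contraTneq hab => ->; by rewrite hirr.
Qed.

Lemma edge_rel a b : [set a; b] \in edges e -> e a b.
Proof.
move/edgesP=> [x [y [hxy xy h]]].
have : a \in [set x; y] by rewrite -h set21.
rewrite !inE => /orP [/eqP ax|/eqP ay].
  subst a; have : y \in [set x; b] by rewrite h set22.
  by rewrite !inE => /orP [/eqP yx|/eqP <-] //; rewrite yx eqxx in xy.
subst a; have : x \in [set y; b] by rewrite h set21.
by rewrite !inE => /orP [/eqP yx|/eqP <-]; [rewrite yx eqxx in xy| rewrite hsym].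
Qed.

Lemma edge_in a b : e a b -> [set a; b] \in edges e.
Proof. by move=> h; rewrite inE; apply/existsP; exists a; apply/existsP; exists b; rewrite h eqxx. Qed.

Lemma cyc_edges s : is_cycle e s -> cycle_edges s \subset edges e.
Proof.
case/andP=> /andP [cs us] _; apply/subsetP=> E /imsetP [x xs ->].
by apply: edge_in; apply: next_cycle cs xs.
Qed.

Lemma next_facts (s : seq V) v : uniq s -> 2 < size s -> v \in s ->
  next s v != v /\ next s (next s v) != v.
Proof.
move=> us ss vs; case: (rot_to vs) => i s' hr.
have us' : uniq (v :: s') by rewrite -hr rot_uniq.
have ss' : 2 < size (v :: s') by rewrite -hr size_rot.
rewrite -!(next_rot i us) hr.
case: s' us' ss' {hr} => [|w [|u r]] //= us' _.
move: us'; rewrite !inE => /andP [/norP [vw /norP [vu _]] /andP [/norP [wu _] _]].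
rewrite eqxx [w == v]eq_sym (negPf vw) eqxx; split=> //; by rewrite eq_sym.
Qed.

Lemma par_cyc s v : is_cycle e s -> par (cycle_edges s) v = false.
Proof.
move=> hc; have /andP [/andP [cs us] ss] := hc.
rewrite /par; case: (boolP (v \in s)) => vs; last first.
  rewrite (_ : nb _ v = set0) ?cards0 //; apply/setP=> y; rewrite !inE.
  apply/negP=> /imsetP [x xs h].
  have : v \in [set x; next s x] by rewrite -h set21.
  by rewrite !inE => /orP [/eqP vx|/eqP vn]; move: vs; rewrite ?vx ?vn ?mem_next xs.
have [nv nnv] := next_facts us ss vs.
have npv : next s v != prev s v.
  apply: contraNneq nnv => ->; by rewrite next_prev.
rewrite (_ : nb _ v = [set next s v; prev s v]) ?cards2 ?npv //.
apply/setP=> y; rewrite !inE; apply/imsetP/orP.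
  move=> [x xs h]; have [nx _] := next_facts us ss xs.
  have : v \in [set x; next s x] by rewrite -h set21.
  rewrite !inE => /orP [/eqP vx|/eqP vn].
    subst x; left; move: h => /eqP; rewrite set2_eqL 1?eq_sym //.
  right; have : x \in [set v; y] by rewrite h set21.
  rewrite !inE => /orP [/eqP xv|/eqP <-].
    by move: nx; rewrite -vn xv eqxx.
  by rewrite vn prev_next.
move=> [/eqP ->|/eqP ->].
  by exists v.
exists (prev s v); first by rewrite mem_prev.
by rewrite next_prev // setUC.
Qed.

Lemma cyc_ne s : is_cycle e s -> cycle_edges s != set0.
Proof.
case: s => [|x s] //; move=> _; apply/set0Pn; exists [set x; next (x :: s) x].
by apply: imset_f; rewrite inE eqxx.
Qed.

Section Even.
Variable Y : {set {set V}}.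
Hypothesis YE : Y \subset edges e.
Hypothesis Yev : forall v, ~~ par Y v.
Let r := fun x y => [set x; y] \in Y.

Lemma r_e x y : r x y -> e x y.
Proof. by move=> h; apply: edge_rel; apply: (subsetP YE). Qed.

Lemma r_sym x y : r x y = r y x.
Proof. by rewrite /r setUC. Qed.

Lemma close_cycle x p : uniq (x :: p) -> path r x p -> p != [::] ->
  (forall y, r x y -> y \in x :: p) ->
  exists s, is_cycle e s /\ cycle_edges s \subset Y.
Proof.
case: p => [|h p] // ux px _ hall.
have rxh : r x h by case/andP: px.
have : exists2 y, r x y & y != h.
  apply/exists_inP; apply: contraT; rewrite negb_exists_in => /forall_inP hn.
  have : nb Y x \subset [set h].
    by apply/subsetP=> y; rewrite !inE => /hn; rewrite negbK.
  move/subset_leq_card; rewrite cards1 => hle.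
  have : 0 < #|nb Y x| by apply/card_gt0P; exists h; rewrite inE.
  move=> hgt; have := Yev x; rewrite /par (_ : #|nb Y x| = 1) //; lia.
move=> [y rxy yh].
have yx : y != x by apply: contraTneq rxy => ->; rewrite /r setUid; apply/negP=> /(subsetP YE) hE; move: (edge_rel (a:=x) (b:=x)); rewrite setUid => /(_ hE); rewrite hirr.
have := hall y rxy; rewrite !inE (negPf yx) (negPf yh) /= => yp.
case/splitPr: yp ux px => p1 p2 ux px.
exists (x :: h :: rcons p1 y).
have pa : path r x (rcons (h :: p1) y).
  move: px; rewrite -cat_cons cat_path rcons_path => /andP [-> /=]; by case/andP.
have cr : cycle r (x :: h :: rcons p1 y).
  rewrite /cycle -rcons_cons rcons_path pa /= last_rcons r_sym //.
have uc : uniq (x :: h :: rcons p1 y).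
  move: ux; rewrite (_ : x :: h :: p1 ++ y :: p2 = (x :: h :: rcons p1 y) ++ p2).
    by rewrite cat_uniq => /andP [].
  by rewrite /= -cats1 -catA.
split.
  rewrite /is_cycle /ucycleb uc andbT /= size_rcons ltnS ltnS ltn0Sn andbT.
  by apply: sub_cycle cr => a b /r_e.
apply/subsetP=> E /imsetP [z zs ->].
exact: next_cycle cr zs.
Qed.
End Even.

Lemma even_cycle (Y : {set {set V}}) : Y \subset edges e -> Y != set0 -> (forall v, ~~ par Y v) ->
  exists s, is_cycle e s /\ cycle_edges s \subset Y.
Proof.
move=> YE Yne Yev.
have key : forall k x p, uniq (x :: p) -> path (fun a b => [set a; b] \in Y) x p ->
    p != [::] -> #|V| - size p <= k -> exists s, is_cycle e s /\ cycle_edges s \subset Y.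
  elim=> [|k IH] x p ux px pn hk.
    apply: (close_cycle YE Yev ux px pn) => y rxy; apply: contraT => yn.
    have : uniq (y :: x :: p) by rewrite cons_uniq yn ux.
    move/card_uniqP=> hc; have := max_card (mem (y :: x :: p)).
    rewrite hc /= => h; move: hk; rewrite leqn0 subn_eq0 => hk; have := leq_trans h hk; move/(leq_trans (leqnSn _)); by rewrite ltnn.
  case: (boolP [exists y, ([set x; y] \in Y) && (y \notin x :: p)]).
    move/existsP=> [y /andP [rxy yn]].
    apply: (IH y (x :: p)) => //=.
      by rewrite yn -cons_uniq.
    by rewrite px andbT setUC.
    by move: hk; rewrite subnS; case: (#|V| - size p).
  rewrite negb_exists => /forallP hn.
  apply: (close_cycle YE Yev ux px pn) => y rxy.
  by have := hn y; rewrite rxy /= negbK.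
case/set0Pn: Yne => E EY.
have [a [b [hab ab hE]]] := edgesP (subsetP YE E EY).
apply: (key #|V| a [:: b]) => //=.
  by rewrite inE ab.
  by rewrite -hE EY.
lia.
Qed.

Lemma dec_even (Y : {set {set V}}) : Y \subset edges e -> (forall v, ~~ par Y v) ->
  exists ss : seq (seq V), all (is_cycle e) ss /\ Y = sdL (map (@cycle_edges V) ss).
Proof.
move: {2}#|Y| (leqnn #|Y|) => n; elim: n Y => [|n IH] Y hn YE Yev.
  exists [::]; split=> //; apply/eqP; rewrite -cards_eq0; lia.
case: (eqVneq Y set0) => [->|Yne]; first by exists [::].
have [s [hs sY]] := even_cycle YE Yne Yev.
set Y' := symdiff Y (cycle_edges s).
have Y'Y : Y' \subset Y.
  by apply/subsetP=> E; rewrite in_sd; move/subsetP: sY => /(_ E); case: (E \in Y); case: (E \in _) => // ->.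
have hlt : #|Y'| < #|Y|.
  apply: proper_card; rewrite properEneq Y'Y andbT.
  apply/eqP=> h; move: (cyc_ne hs) => /set0Pn [E Es].
  have : E \in Y' by rewrite h (subsetP sY).
  by rewrite in_sd Es (subsetP sY).
have [ss [hss hY']] : exists ss : seq (seq V), all (is_cycle e) ss /\ Y' = sdL (map (@cycle_edges V) ss).
  apply: IH.
  - by rewrite -ltnS (leq_trans hlt hn).
  - exact: subset_trans Y'Y YE.
  - by move=> v; rewrite par_sd par_cyc // addbF Yev.
exists (s :: ss); split; first by rewrite /= hs hss.
by rewrite /= -hY' /Y' [symdiff Y _]sdC sdK.
Qed.

Lemma Oset_sd Y Z : Oset (symdiff Y Z) = symdiff (Oset Y) (Oset Z).
Proof. by apply/setP=> v; rewrite in_sd !inE par_sd. Qed.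

Lemma Oset_even (Y : {set {set V}}) : Y \subset edges e -> ~~ odd #|Oset Y|.
Proof.
move: {2}#|Y| (leqnn #|Y|) => n; elim: n Y => [|n IH] Y hn YE.
  have -> : Y = set0 by apply/eqP; rewrite -cards_eq0; lia.
  rewrite (_ : Oset set0 = set0) ?cards0 //; apply/setP=> v; by rewrite !inE par0.
case: (eqVneq Y set0) => [->|/set0Pn [E EY]].
  rewrite (_ : Oset set0 = set0) ?cards0 //; apply/setP=> v; by rewrite !inE par0.
have hY : Y = symdiff [set E] (Y :\ E).
  apply/setP=> F; rewrite in_sd !inE.
  by case: (eqVneq F E) => [->|] //=; rewrite EY.
have [a [b [hab ab hE]]] := edgesP (subsetP YE E EY).
rewrite hY Oset_sd card_sd.
have -> : Oset [set E] = [set a; b].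
  apply/setP=> v; rewrite !inE hE (par1 _ ab).
  by case: (eqVneq v a) => [->|] /=; rewrite ?(negPf ab) // addFb.
rewrite cards2 ab /=; apply: IH.
  by move: hn; rewrite (cardsD1 E Y) EY.
by apply: subset_trans YE; apply/subsetP=> F; rewrite !inE => /andP [].
Qed.

Lemma arc s a t : is_cycle e (a :: s) -> t \in a :: s ->
  exists2 P : {set {set V}}, P \subset cycle_edges (a :: s) & forall v, par P v = (v == a) (+) (v == t).
Proof.
move=> hc ts; have /andP [/andP [cs us] ss] := hc.
have claim : forall k, k < size (a :: s) -> exists2 P : {set {set V}}, P \subset cycle_edges (a :: s) &
    forall v, par P v = (v == a) (+) (v == nth a (a :: s) k).
  elim=> [|k IH] hk.
    by exists set0; [apply: sub0set| move=> v; rewrite par0 /= addbb].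
  have [P PE hP] := IH (ltnW hk).
  set x := nth a (a :: s) k; set y := nth a (a :: s) k.+1.
  have xs : x \in a :: s by apply: mem_nth; apply: ltnW.
  have nx : next (a :: s) x = y.
    by rewrite next_nth xs /x index_uniq // ltnW.
  have xy : x != y.
    by rewrite /x /y nth_uniq // ?(ltnW hk) // ltn_eqF.
  exists (symdiff P [set [set x; y]]).
    apply/subsetP=> E; rewrite in_sd inE.
    case EP: (E \in P); first by rewrite (subsetP PE).
    by move=> /= /eqP ->; rewrite -nx; apply: imset_f.
  move=> v; rewrite par_sd hP par1 //.
  by case: (v == a); case: (v == x); case: (v == y).
have hi : index t (a :: s) < size (a :: s) by rewrite index_mem.
have [P PE hP] := claim _ hi.
by exists P => // v; rewrite hP nth_index.
Qed.

Lemma join s a (T : {set V}) : is_cycle e (a :: s) -> T \subset [set x in a :: s] ->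
  exists2 J : {set {set V}}, J \subset cycle_edges (a :: s) &
    forall v, par J v = (v \in T) (+) ((v == a) && odd #|T|).
Proof.
move=> hc; move: {2}#|T| (leqnn #|T|) => n; elim: n T => [|n IH] T hn TS.
  have -> : T = set0 by apply/eqP; rewrite -cards_eq0; lia.
  by exists set0; [apply: sub0set | move=> v; rewrite par0 inE cards0 andbF].
case: (eqVneq T set0) => [->|/set0Pn [t tT]].
  by exists set0; [apply: sub0set | move=> v; rewrite par0 inE cards0 andbF].
have hT := cardsD1 t T; rewrite tT in hT.
have hn' : #|T :\ t| <= n by lia.
have [J JE hJ] := IH (T :\ t) hn' (subset_trans (subsetDl _ _) TS).
have ts : t \in a :: s by move/subsetP: TS => /(_ t tT); rewrite inE.
have [P PE hP] := arc hc ts.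
exists (symdiff J P).
  apply/subsetP=> E; rewrite in_sd.
  by case EJ: (E \in J); [rewrite (subsetP JE) | move=> /= /(subsetP PE)].
move=> v; rewrite par_sd hJ hP hT /= !inE.
case: (eqVneq v t) => [->|vt] /=; first by rewrite tT; case: (t == a); case: (odd _).
by case: (v \in T); case: (v == a); case: (odd _).
Qed.

Lemma core (S : finType) (C : {set {set S}}) (f : {set V} -> S) :
  (forall A B, A \in C -> B \in C -> A \subset B -> A = B) -> is_binary C ->
  circuit_injection e C f ->
  (forall T : {set V}, ~~ odd #|T| -> exists s, is_cycle e s /\ T \subset cycle_vertices s) ->
  ~ nontrivial_ci e C f.
Proof.
move=> hI hbin [finj [fim fcyc]] hT [D DC Dbad].
pose pre (D0 : {set S}) := [set E in edges e | f E \in D0].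
have preP D0 E : (E \in pre D0) = (E \in edges e) && (f E \in D0) by rewrite /pre in_set.
have pre_sd D1 D2 : pre (symdiff D1 D2) = symdiff (pre D1) (pre D2).
  apply/setP=> E; rewrite in_sd !preP in_sd; by case: (E \in edges e).
have pre_im (Y : {set {set V}}) : Y \subset edges e -> pre (f @: Y) = Y.
  move=> YE; apply/setP=> E; rewrite preP; apply/andP/idP => [[Ee /imsetP [F FY h]]|EY].
    by rewrite (finj _ _ Ee (subsetP YE F FY) h).
  by rewrite (subsetP YE E EY) imset_f.
have im_pre D0 : f @: pre D0 = D0.
  apply/setP=> x; apply/imsetP/idP => [[E] | xD].
    by rewrite preP => /andP [_ h] ->.
  have : x \in f @: edges e by rewrite fim inE.
  by case/imsetP=> E Ee xE; exists E => //; rewrite preP Ee -xE.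
have pre0 : pre set0 = set0 by apply/setP=> E; rewrite preP !inE andbF.
have pre_sdL (l : seq {set S}) : pre (sdL l) = sdL (map pre l).
  by elim: l => [|A l IH] //=; rewrite pre_sd IH.
have pre_mono (A B : {set S}) : A \subset B -> pre A \subset pre B.
  by move=> /subsetP h; apply/subsetP=> E; rewrite !preP => /andP [-> /h].
have preE D0 : pre D0 \subset edges e by apply/subsetP=> E; rewrite preP => /andP [].
have [s0 [hs0 _]] : exists s, is_cycle e s /\ set0 \subset cycle_vertices s.
  by apply: hT; rewrite cards0.
have h0 : set0 \notin C.
  apply/negP=> h0; have := hI _ _ h0 (fcyc _ hs0) (sub0set _).
  move/esym/eqP; rewrite imset_eq0; apply/negP; exact: cyc_ne.
set X := pre D.
have XE : X \subset edges e := preE D.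
have DX : f @: X = D := im_pre D.
set T := Oset X.
have Tne : T != set0.
  apply/negP=> /eqP hT0.
  have Xne : X != set0.
    apply: contraNneq h0 => hX; have <- // : D = set0 by rewrite -DX hX imset0.
  have Xev : forall v, ~~ par X v.
    move=> v; apply/negP=> hv; have : v \in T by rewrite /T inE.
    by rewrite hT0 inE.
  have [s [hs sX]] := even_cycle XE Xne Xev.
  have := hI _ _ (fcyc _ hs) DC.
  rewrite -DX => /(_ (imsetS _ sX)) h.
  by apply: (Dbad s hs); rewrite -DX.
have [s [hs TS]] := hT T (Oset_even XE).
case: s hs TS => [|a s'] hs TS; first by case/andP: hs.
have [J JE hJ] := join hs TS.
have hJT : forall v, par J v = (v \in T).
  by move=> v; rewrite hJ (negPf (Oset_even XE)) andbF addbF.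
have sE := cyc_edges hs.
set Z := symdiff X J.
have ZE : Z \subset edges e.
  apply/subsetP=> E; rewrite in_sd.
  case EX: (E \in X); first by rewrite (subsetP XE).
  by move=> /= /(subsetP JE) /(subsetP sE).
have Zev : forall v, ~~ par Z v.
  by move=> v; rewrite par_sd hJT /T inE addbb.
have [ss [hss hZ]] := dec_even ZE Zev.
set l := D :: map (fun s => f @: cycle_edges s) ss.
have lC : all (mem C) l.
  rewrite /= DC /=; apply/allP=> A /mapP [s1 s1ss ->].
  by apply: fcyc; move/allP: hss; apply.
have hpre : pre (sdL l) = J.
  rewrite pre_sdL /= -map_comp.
  have hm : map (pre \o (fun s => f @: cycle_edges s)) ss = map (@cycle_edges V) ss.
    apply/eq_in_map => s1 s1ss /=; apply: pre_im; apply: cyc_edges.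
    by move/allP: hss; apply.
  by rewrite hm -hZ /Z sdK.
have fJ : f @: J = sdL l by rewrite -hpre im_pre.
case/set0Pn: Tne => t tT.
have Jne : J != set0.
  apply/negP=> /eqP J0; have := hJT t; by rewrite tT J0 par0.
have lne : sdL l != set0 by rewrite -fJ imset_eq0.
have [D' D'C D'sub] := W_lemma hbin h0 lC lne.
have hsub : D' \subset f @: cycle_edges (a :: s').
  by apply: subset_trans D'sub _; rewrite -fJ; apply: imsetS.
have D'eq := hI _ _ D'C (fcyc _ hs) hsub.
have EJ : cycle_edges (a :: s') \subset J.
  rewrite -(pre_im _ sE) -(pre_im _ (subset_trans JE sE)); apply: pre_mono.
  by rewrite -D'eq fJ.
have JEs : J = cycle_edges (a :: s') by apply/eqP; rewrite eqEsubset JE EJ.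
by have := hJT t; rewrite tT JEs par_cyc.
Qed.
End G.

Theorem lemma2p3 (V : finType) (e : rel V) :
  symmetric e -> irreflexive e -> no_isolated_vertices e ->
  ((exists N, #|V| = N.*2.+1) -> almost_hamiltonian e ->
    forall (S : finType) (C : {set {set S}}) (f : {set V} -> S),
      is_matroid C -> is_binary C -> circuit_injection e C f ->
      ~ nontrivial_ci e C f) /\
  ((exists N, #|V| = N.*2) -> hamiltonian e ->
    forall (S : finType) (C : {set {set S}}) (f : {set V} -> S),
      is_matroid C -> is_binary C -> circuit_injection e C f ->
      ~ nontrivial_ci e C f).
Proof.
move=> hsym hirr _; split.
  move=> [N hN] hah S C f [_ [hI _]] hbin hci.
  apply: (core hsym hirr hI hbin hci) => T hT.
  case: (boolP [exists z, z \notin T]) => [/existsP [z zT] | /existsPn hall].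
    have hA : #|[set~ z]| = #|V| - 1 by rewrite cardsC1 subn1.
    have [s [hs As]] := hah [set~ z] hA.
    exists s; split => //; apply: subset_trans As.
    by apply/subsetP=> x xT; rewrite in_setC1; apply: contraTneq xT => ->.
  have TT : T = [set: V] by apply/setP=> x; rewrite inE; have := hall x; rewrite negbK.
  by move: hT; rewrite TT cardsT hN /= odd_double.
move=> _ [s [hs hV]] S C f [_ [hI _]] hbin hci.
apply: (core hsym hirr hI hbin hci) => T _; exists s; split => //.
by rewrite hV subsetT.
Qed.
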